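(* Let $F$ be an infinite field and $n\ge2$. If $f,h\in\mathcal{B}_{(g_1,\dots,g_k)}$ satisfy $f\le_{\mathcal{B}_{(g_1,\dots,g_k)}}h$, then $h\in\langle\{f\}\cup I\rangle_{T_{\mathbb{Z}_n}}$.
   Context: $UT_n(F)^{(-)}$: $n\times n$ upper triangular matrices, bracket $[a,b]=ab-ba$, canonical $\mathbb{Z}_n$-grading (degree-$k$ component spanned by $e_{ij}$, $j-i=k$); $I$ is its $T_{\mathbb{Z}_n}$-ideal of graded identities in the free graded Lie algebra with variables $y_1,y_2,\dots$ of degree $0$ and countably many variables of each nonzero degree. Commutators are left normed. Fix distinct variables $z_1,\dots,z_k$ of degrees $g_1,\dots,g_k\in\{1,\dots,n-1\}$ with $\sum g_i\le n-1$. $\mathcal{B}_{(g_1,\dots,g_k)}$ is the set of commutators $[z_{\sigma(1)},a^{(1)}_1y_1,\dots,a^{(1)}_my_m,z_{\sigma(2)},a^{(2)}_1y_1,\dots,a^{(2)}_my_m,\dots,z_{\sigma(k)},a^{(k)}_1y_1,\dots,a^{(k)}_my_m]$ with $\sigma\in S_k$, $\sigma(1)=1$, $m\ge0$, $a^{(j)}_i\ge0$, where $a y$ means $y$ repeated $a$ times. For such $f$, $V_f=((a^{(1)}_1,\dots,a^{(k)}_1),\dots,(a^{(1)}_m,\dots,a^{(k)}_m))$, a finite sequence in $\mathbb{N}_0^k$. For finite sequences in $\mathbb{N}_0^k$, $(p_1,\dots,p_m)\le_k(q_1,\dots,q_r)$ iff there is a strictly increasing $\varphi:\{1,\dots,m\}\to\{1,\dots,r\}$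 with $p_i\le q_{\varphi(i)}$ componentwise. $f\le_{\mathcal{B}_{(g_1,\dots,g_k)}}h$ iff $f,h$ have the same permutation $\sigma$ and $V_f\le_kV_h$. *)

(* Defs.v *)
From HB Require Import structures.
From mathcomp Require Import all_boot all_order all_algebra all_fingroup.
Set Implicit Arguments. Unset Strict Implicit. Unset Printing Implicit Defensive.
Import Order.TTheory GRing.Theory Num.Theory.
Local Open Scope ring_scope.

(* Graded variables of the free Z_n-graded Lie algebra: a variable is a pair
   (degree in {0,..,n-1} ~ Z_n, index in nat); countably many of each degree.
   The degree-0 variables (0,i), i = 0,1,2,... are y_1, y_2, y_3, ... *)
Definition var (n : nat) := ('I_n * nat)%type.

Inductive lterm (F : Type) (n : nat) : Type :=
| LVar : var n -> lterm F n
| LZero : lterm F n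
| LAdd : lterm F n -> lterm F n -> lterm F n
| LScale : F -> lterm F n -> lterm F n
| LBr : lterm F n -> lterm F n -> lterm F n.

Arguments LZero {F n}.

(* Equality in the free Lie algebra over F: the congruence generated by
   the F-vector space axioms, bilinearity, alternation and Jacobi. *)
Inductive lie_eq (F : fieldType) (n : nat) : lterm F n -> lterm F n -> Prop :=
| le_refl t : lie_eq t t
| le_sym t u : lie_eq t u -> lie_eq u t
| le_trans t u w : lie_eq t u -> lie_eq u w -> lie_eq t w
| le_add t t' u u' : lie_eq t t' -> lie_eq u u' -> lie_eq (LAdd t u) (LAdd t' u')
| le_scale c t t' : lie_eq t t' -> lie_eq (LScale c t) (LScale c t')
| le_br t t' u u' : lie_eq t t' -> lie_eq u u' -> lie_eq (LBr t u) (LBr t' u')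
| le_addA a b c : lie_eq (LAdd a (LAdd b c)) (LAdd (LAdd a b) c)
| le_addC a b : lie_eq (LAdd a b) (LAdd b a)
| le_add0 a : lie_eq (LAdd LZero a) a
| le_addN a : lie_eq (LAdd a (LScale (-1) a)) LZero
| le_scaleA c d a : lie_eq (LScale c (LScale d a)) (LScale (c * d) a)
| le_scale1 a : lie_eq (LScale 1 a) a
| le_scaleDr c a b : lie_eq (LScale c (LAdd a b)) (LAdd (LScale c a) (LScale c b))
| le_scaleDl c d a : lie_eq (LScale (c + d) a) (LAdd (LScale c a) (LScale d a))
| le_brDl a b c : lie_eq (LBr (LAdd a b) c) (LAdd (LBr a c) (LBr b c))
| le_brDr a b c : lie_eq (LBr a (LAdd b c)) (LAdd (LBr a b) (LBr a c))
| le_brZl c a b : lie_eq (LBr (LScale c a) b) (LScale c (LBr a b))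
| le_brZr c a b : lie_eq (LBr a (LScale c b)) (LScale c (LBr a b))
| le_brAlt a : lie_eq (LBr a a) LZero
| le_jacobi a b c :
    lie_eq (LAdd (LBr (LBr a b) c) (LAdd (LBr (LBr b c) a) (LBr (LBr c a) b))) LZero.

(* Homogeneity of degree g (an element of Z_n represented by g < n). *)
Inductive lhom (F : Type) (n : nat) : nat -> lterm F n -> Prop :=
| lh_var v : lhom (val v.1) (LVar F v)
| lh_zero g : lhom g LZero
| lh_add g t u : lhom g t -> lhom g u -> lhom g (LAdd t u)
| lh_scale g c t : lhom g t -> lhom g (LScale c t)
| lh_br g1 g2 t u : lhom g1 t -> lhom g2 u -> lhom ((g1 + g2) %% n)%N (LBr t u).

(* Substitution of terms for variables (= endomorphism of the free Lie algebra). *)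
Fixpoint lsubst (F : Type) (n : nat) (s : var n -> lterm F n) (t : lterm F n)
  : lterm F n :=
  match t with
  | LVar v => s v
  | LZero => LZero
  | LAdd a b => LAdd (lsubst s a) (lsubst s b)
  | LScale c a => LScale c (lsubst s a)
  | LBr a b => LBr (lsubst s a) (lsubst s b)
  end.

Definition graded_subst (F : Type) (n : nat) (s : var n -> lterm F n) : Prop :=
  forall v : var n, lhom (val v.1) (s v).

Inductive tideal (F : fieldType) (n : nat) (S : lterm F n -> Prop)
  : lterm F n -> Prop :=
| ti_gen t : S t -> tideal S t
| ti_eq t u : lie_eq t u -> tideal S t -> tideal S u
| ti_zero : tideal S LZero
| ti_add t u : tideal S t -> tideal S u -> tideal S (LAdd t u)
| ti_scale c t : tideal S t -> tideal S (LScale c t)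
| ti_brl t u : tideal S t -> tideal S (LBr t u)
| ti_brr t u : tideal S t -> tideal S (LBr u t)
| ti_subst s t : graded_subst s -> tideal S t -> tideal S (lsubst s t).

Fixpoint leval (F : fieldType) (n : nat) (e : var n -> 'M[F]_n) (t : lterm F n)
  : 'M[F]_n :=
  match t with
  | LVar v => e v
  | LZero => 0
  | LAdd a b => leval e a + leval e b
  | LScale c a => c *: leval e a
  | LBr a b => leval e a *m leval e b - leval e b *m leval e a
  end.

(* Degree-k component of UT_n(F) for the canonical Z_n-grading:
   span of e_ij with j - i = k. *)
Definition ut_comp (F : fieldType) (n k : nat) (A : 'M[F]_n) : Prop :=
  forall i j : 'I_n, A i j != 0 -> val j = (val i + k)%N.

Definition UT_identity (F : fieldType) (n : nat) (t : lterm F n) : Prop :=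
  forall e : var n -> 'M[F]_n,
    (forall v : var n, ut_comp (val v.1) (e v)) -> leval e t = 0.

Definition infinite_field (F : fieldType) : Prop :=
  forall s : seq F, exists x : F, x \notin s.

(* y_{i+1} := the degree-0 variable (0, i). *)
Definition yvar (n : nat) (hn : (0 < n)%N) (i : nat) : var n := (Ordinal hn, i).

(* The left-normed commutator
   [z_{s(1)}, a^(1)_1 y_1, ..., a^(1)_m y_m, ..., z_{s(k)}, a^(k)_1 y_1, ..., a^(k)_m y_m]
   where V = (V_1, ..., V_m), V_i = (a^(1)_i, ..., a^(k)_i) (block j <-> V_i j). *)
Definition Bcomm (F : Type) (n k : nat) (hn : (0 < n)%N) (hk : (0 < k)%N)
  (z : 'I_k -> var n) (s : 'S_k) (V : seq ('I_k -> nat)) : lterm F n :=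
  let ys (j : 'I_k) : seq (lterm F n) :=
    flatten [seq nseq (nth (fun _ => 0%N) V i j) (LVar F (yvar hn i))
            | i <- iota 0 (size V)] in
  let tl := flatten [seq (if val j == 0%N then [::] else [:: LVar F (z (s j))]) ++ ys j
                    | j <- enum 'I_k] in
  foldl (@LBr F n) (LVar F (z (s (Ordinal hk)))) tl.

Definition leq_k (k : nat) (p q : seq ('I_k -> nat)) : Prop :=
  exists phi : nat -> nat,
    (forall i j, (i < j < size p)%N -> (phi i < phi j)%N) /\
    (forall i, (i < size p)%N ->
       (phi i < size q)%N /\
       forall c : 'I_k, (nth (fun _ => 0%N) p i c <= nth (fun _ => 0%N) q (phi i) c)%N).

(* Main.v *)
Require Import Defs.
From mathcomp Require Import all_boot all_order all_algebra all_fingroup.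
From mathcomp Require Import zify.
Set Implicit Arguments. Unset Strict Implicit. Unset Printing Implicit Defensive.
Import Order.TTheory GRing.Theory Num.Theory.

Section ZM.
Local Open Scope ring_scope.
Lemma sub4 (V : zmodType) (a b c d : V) : (a - b) - (c - d) = (a - c) - (b - d).
Proof. by rewrite !opprD !opprK addrACA. Qed.
Lemma jac6 (V : zmodType) (a b c d e f : V) :
 (a - b) - (c - d) = ((a - e) - (f - d)) - ((b - f) - (e - c)).
Proof.
rewrite (opprB (b - f)) addrACA subrKA -opprD [f - d + _]addrC subrKA sub4.
done.
Qed.
End ZM.

Section Mat.
Local Open Scope ring_scope.
Variables (F : fieldType) (n : nat).
Definition br (A B : 'M[F]_n) := A *m B - B *m A.

Lemma brBl A B C : br (A - B) C = br A C - br B C.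
Proof. by rewrite /br mulmxBl mulmxBr sub4. Qed.

Lemma br_swap M X Y : X *m Y = Y *m X -> br (br M Y) X = br (br M X) Y.
Proof. move=> hXY; rewrite /br !mulmxBl !mulmxBr -!mulmxA hXY !mulmxA hXY.
by rewrite sub4. Qed.

Lemma br_jacobi M Z Y : br M (br Z Y) = br (br M Z) Y - br (br M Y) Z.
Proof. by rewrite /br !mulmxBl !mulmxBr !mulmxA -jac6. Qed.

Lemma diag_comm (A B : 'M[F]_n) : ut_comp 0%N A -> ut_comp 0%N B -> A *m B = B *m A.
Proof.
have dg : forall C : 'M[F]_n, ut_comp 0%N C -> C = diag_mx (\row_i C i i).
  move=> C hC; apply/matrixP => i j; rewrite !mxE.
  case: eqP => [->|hij] //=; rewrite mulr0n.
  by apply/eqP; apply/negP => /negP/hC; rewrite addn0 => /val_inj hji; apply hij.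
move=> hA hB; rewrite (dg _ hA) (dg _ hB); exact: diag_mxC.
Qed.
End Mat.

Lemma foldl_flatten (A B C : Type) (f : A -> B -> A) (g : C -> seq B) a l :
  foldl f a (flatten [seq g i | i <- l]) = foldl (fun M i => foldl f M (g i)) a l.
Proof. by elim: l a => //= x l IH a; rewrite foldl_cat IH. Qed.

Lemma foldl_ext_in (A B : eqType) (f g : A -> B -> A) a l :
  (forall M i, i \in l -> f M i = g M i) -> foldl f a l = foldl g a l.
Proof.
elim: l a => //= x l IH a h; rewrite h ?mem_head // IH // => M i hi.
by apply: h; rewrite in_cons hi orbT.
Qed.

Section Terms.
Local Open Scope ring_scope.
Variables (F : fieldType) (n : nat).
Implicit Types (t : lterm F n) (e : var n -> 'M[F]_n).

Lemma leval_foldl e a l :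
  leval e (foldl (@LBr F n) a l) = foldl (@br F n) (leval e a) (map (leval e) l).
Proof. by elim: l a => //= x l IH a; rewrite IH. Qed.

Lemma leval_lsubst e (sg : var n -> lterm F n) t :
  leval e (lsubst sg t) = leval (fun v => leval e (sg v)) t.
Proof. by elim: t => //= [a -> b ->|c a ->|a -> b ->]. Qed.

Variable S : lterm F n -> Prop.
Hypothesis hS : forall t, UT_identity t -> S t.

Definition graded_env e := forall v : var n, ut_comp (val v.1) (e v).

Lemma ideal_sem X A : tideal S A ->
  (forall e, graded_env e -> leval e X = leval e A) -> tideal S X.
Proof.
move=> hA hXA.
have h1 : tideal S (LAdd A (LAdd X (LScale (-1) A))).
  apply: ti_add => //; apply: ti_gen; apply: hS => e he /=.
  by rewrite hXA // scaleN1r subrr.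
apply: ti_eq h1.
apply: Defs.le_trans (le_addA _ _ _) _.
apply: Defs.le_trans (le_add (le_addC _ _) (Defs.le_refl _)) _.
apply: Defs.le_trans (le_sym (le_addA _ _ _)) _.
apply: Defs.le_trans (le_add (Defs.le_refl _) (le_addN _)) _.
apply: Defs.le_trans (le_addC _ _) _.
exact: le_add0.
Qed.

Lemma ideal_sem2 X A B : tideal S A -> tideal S B ->
  (forall e, graded_env e -> leval e X = leval e A - leval e B) -> tideal S X.
Proof.
move=> hA hB hX; apply: (@ideal_sem X (LAdd A (LScale (-1) B))).
  by apply: ti_add => //; apply: ti_scale.
by move=> e he /=; rewrite hX // scaleN1r.
Qed.

End Terms.

Section Gm.
Local Open Scope ring_scope.
Variables (F : fieldType) (n : nat).
Local Notation br := (@br F n).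
Implicit Types (M : 'M[F]_n) (E : nat -> 'M[F]_n) (L : nat -> seq nat) (s : seq nat).

Lemma foldl_brB A B l : foldl br (A - B) l = foldl br A l - foldl br B l.
Proof. by elim: l A B => //= x l IH A B; rewrite brBl IH. Qed.

Variable Yf : nat -> 'M[F]_n.
Hypothesis hY : forall a b, Yf a *m Yf b = Yf b *m Yf a.

Lemma foldl_br_rem M a s : a \in s ->
  foldl br M (map Yf s) = foldl br (br M (Yf a)) (map Yf (rem a s)).
Proof.
elim: s M => //= b L IH M; rewrite in_cons; case: eqP => [-> _|hba] /=.
  by rewrite eqxx.
move=> ha; have -> : (b == a) = false by apply/eqP => hb; apply: hba.
by rewrite /= (IH _ ha) br_swap.
Qed.

Lemma foldl_br_perm M s s' : perm_eq s s' ->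
  foldl br M (map Yf s) = foldl br M (map Yf s').
Proof.
elim: s M s' => [|a L IH] M L' hp.
  by move: hp; rewrite perm_sym => /perm_nilP ->.
have ha : a \in L' by rewrite -(perm_mem hp) mem_head.
rewrite (foldl_br_rem M ha) /= (IH _ (rem a L')) //.
by rewrite -(perm_cons a) (perm_trans hp) // perm_to_rem.
Qed.

Definition stp E L i M := foldl br (if i == 0%N then M else br M (E i)) (map Yf (L i)).
Definition Gm E L k := foldl (fun M i => stp E L i M) (E 0%N) (iota 0 k).
Definition addL L j v := fun i => if i == j then L i ++ [:: v] else L i.

Lemma stpB E L i A B : stp E L i (A - B) = stp E L i A - stp E L i B.
Proof. by rewrite /stp; case: eqP => _; rewrite ?brBl foldl_brB. Qed.

Lemma foldl_stpB E L l A B :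
  foldl (fun M i => stp E L i M) (A - B) l =
  foldl (fun M i => stp E L i M) A l - foldl (fun M i => stp E L i M) B l.
Proof. by elim: l A B => //= x l IH A B; rewrite stpB IH. Qed.

Lemma Gm_ext E E' L L' k : (0 < k)%N ->
  (forall i, (i < k)%N -> E i = E' i) ->
  (forall i, (i < k)%N -> perm_eq (L i) (L' i)) -> Gm E L k = Gm E' L' k.
Proof.
move=> hk hE hL; rewrite /Gm hE //; apply: foldl_ext_in => M i; rewrite mem_iota /= => hi.
rewrite /stp hE // (foldl_br_perm _ (hL i hi)) //.
Qed.

Lemma Gm_last E L k v : (0 < k)%N ->
  Gm E (addL L k.-1 v) k = br (Gm E L k) (Yf v).
Proof.
case: k => // k _ /=; rewrite /Gm -addn1 iotaD /= !foldl_cat /=.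
rewrite [in LHS](@foldl_ext_in _ _ _ (fun M i => stp E L i M)); last first.
  move=> M i; rewrite mem_iota /= => hi; rewrite /stp /addL.
  by rewrite (ltn_eqF hi).
by rewrite /stp /addL eqxx map_cat foldl_cat.
Qed.

Lemma Gm_tele E L k j v : (j.+1 < k)%N ->
  Gm (fun i => if i == j.+1 then br (E i) (Yf v) else E i) L k =
  Gm E (addL L j.+1 v) k - Gm E (addL L j v) k.
Proof.
move=> hjk; rewrite /Gm /=.
have -> : k = (j + (k - j.+2).+2)%N by lia.
set r := (k - j.+2)%N; rewrite iotaD /= add0n !foldl_cat /=.
have hne : forall i, (i < j)%N \/ (j.+1 < i)%N -> (i == j) = false /\ (i == j.+1) = false.
  by move=> i hi; split; apply/eqP; lia.
have hsuf : forall L' E'' A, (forall i, (j.+1 < i)%N -> L' i = L i /\ E'' i = E i) ->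
   foldl (fun M i => stp E'' L' i M) A (iota j.+2 r) =
   foldl (fun M i => stp E L i M) A (iota j.+2 r).
  move=> L' E'' A h; apply: foldl_ext_in => M i; rewrite mem_iota => /andP [hi _].
  by rewrite /stp; have [-> ->] := h i hi.
have hpre : forall L' E'', E'' 0%N = E 0%N -> (forall i, (i < j)%N -> L' i = L i /\ E'' i = E i) ->
   foldl (fun M i => stp E'' L' i M) (E'' 0%N) (iota 0 j) =
   foldl (fun M i => stp E L i M) (E 0%N) (iota 0 j).
  move=> L' E'' h0 h; rewrite h0.
  apply: foldl_ext_in => M i; rewrite mem_iota => /andP [_ hi].
  by rewrite /stp; have [-> ->] := h i hi.
rewrite !hpre //; try by move=> i hi; have [h1 h2] := hne i (or_introl hi); rewrite /addL ?h1 ?h2.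
rewrite !hsuf; try by move=> i hi; have [h1 h2] := hne i (or_intror hi); rewrite /addL ?h1 ?h2.
rewrite -foldl_stpB; congr foldl.
set P := foldl _ _ _.
have hj : (j == j.+1) = false by apply/eqP; lia.
have hj' : (j.+1 == j) = false by apply/eqP; lia.
rewrite /stp /addL !eqxx hj hj' /=.
set Q := foldl br _ [seq Yf i | i <- L j].
rewrite br_jacobi foldl_brB; congr (_ - _); last by rewrite map_cat foldl_cat.
rewrite -[LHS]/(foldl br (br Q (E j.+1)) (map Yf (v :: L j.+1))).
rewrite (@foldl_br_perm _ _ (L j.+1 ++ [:: v])) ?map_cat ?foldl_cat //.
by rewrite -cat1s perm_catC.
Qed.
End Gm.

Lemma Gm_ext2 (F : fieldType) (n : nat) (Yf Yf' E E' : nat -> 'M[F]_n) L L' k :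
  (0 < k)%N -> (forall i, (i < k)%N -> E i = E' i) ->
  (forall i, (i < k)%N -> map Yf (L i) = map Yf' (L' i)) ->
  Gm Yf E L k = Gm Yf' E' L' k.
Proof.
move=> hk hE hL; rewrite /Gm hE //; apply: foldl_ext_in => M i; rewrite mem_iota /= => hi.
by rewrite /stp hE // hL.
Qed.

Section TermDef.
Local Open Scope ring_scope.
Variables (F : fieldType) (n : nat) (hn0 : (0 < n)%N) (Z : nat -> var n).

Definition yt i := LVar F (yvar hn0 i).
Definition Term (L : nat -> seq nat) k := foldl (@LBr F n) (LVar F (Z 0))
  (flatten [seq (if i == 0%N then [::] else [:: LVar F (Z i)]) ++ map yt (L i) | i <- iota 0 k]).

Lemma leval_Term e L k :
  leval e (Term L k) = Gm (fun i => e (yvar hn0 i)) (fun i => e (Z i)) L k.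
Proof.
rewrite /Term leval_foldl map_flatten -map_comp foldl_flatten /Gm.
apply: foldl_ext_in => M i _ /=; rewrite map_cat foldl_cat /stp -map_comp.
by case: (i == 0%N).
Qed.

Variables (k : nat) (hk : (0 < k)%N) (S : lterm F n -> Prop).
Hypothesis hS : forall t, UT_identity t -> S t.
Hypothesis hZdeg : forall i, (0 < val (Z i).1)%N.
Hypothesis hZinj : forall i j, (i < k)%N -> (j < k)%N -> Z i = Z j -> i = j.

Lemma Ycomm (e : var n -> 'M[F]_n) : graded_env e -> forall a b,
  e (yvar hn0 a) *m e (yvar hn0 b) = e (yvar hn0 b) *m e (yvar hn0 a).
Proof. by move=> he a b; apply: diag_comm; apply: he. Qed.

Lemma T_perm L L' : tideal S (Term L k) ->
  (forall i, (i < k)%N -> perm_eq (L i) (L' i)) -> tideal S (Term L' k).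
Proof.
move=> hT hp; apply: (ideal_sem hS hT) => e he; rewrite !leval_Term.
by symmetry; apply: Gm_ext => //; apply: Ycomm.
Qed.

Lemma T_add L j v : (j < k)%N -> tideal S (Term L k) -> tideal S (Term (addL L j v) k).
Proof.
move=> hj hT.
have [m hm] : exists m, (j + m)%N = k.-1 by exists (k.-1 - j)%N; lia.
elim: m j hj hm => [|m IH] j hj hm.
  rewrite addn0 in hm; rewrite hm.
  apply: (ideal_sem hS (ti_brl (yt v) hT)) => e he.
  by rewrite leval_Term Gm_last //= leval_Term.
have hj1 : (j.+1 < k)%N by lia.
have hA := IH j.+1 hj1 ltac:(lia).
pose sg := fun w : var n => if w == Z j.+1 then LBr (LVar F w) (yt v) else LVar F w.
have hgs : graded_subst sg.
  move=> w; rewrite /sg; case: eqP => _; last exact: lh_var.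
  have := lh_br (lh_var F w) (lh_var F (yvar hn0 v)).
  by rewrite /= addn0 modn_small.
have hB := ti_subst hgs hT.
apply: (ideal_sem2 hS hA hB) => e he.
rewrite leval_lsubst !leval_Term.
have Hc := Ycomm he.
set Yfe := fun i => e (yvar hn0 i). set Ee := fun i => e (Z i).
have -> : Gm (fun i => leval e (sg (yvar hn0 i))) (fun i => leval e (sg (Z i))) L k =
   Gm Yfe (fun i => if i == j.+1 then br (Ee i) (Yfe v) else Ee i) L k.
  apply: Gm_ext2 => //.
    move=> i hi /=; rewrite /sg /Ee /Yfe; case: eqP => [hz|hne].
      by rewrite (hZinj hi hj1 hz) eqxx.
    case: eqP => [hij|] //; case: hne; by rewrite hij.
  move=> i hi; apply: eq_map => a /=; rewrite /sg; case: eqP => // hz.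
  by have := hZdeg j.+1; rewrite -hz.
by rewrite (Gm_tele Hc) // opprB addrC subrK.
Qed.

Lemma T_phi L (phi : nat -> nat) : tideal S (Term L k) ->
  tideal S (Term (fun i => map phi (L i)) k).
Proof.
move=> hT.
pose sg := fun w : var n => if val w.1 == 0%N then LVar F (w.1, phi w.2) else LVar F w.
have hgs : graded_subst sg.
  move=> w; rewrite /sg; case: eqP => _; [exact: (lh_var F (w.1, phi w.2)) | exact: lh_var].
apply: (ideal_sem hS (ti_subst hgs hT)) => e he.
rewrite leval_lsubst !leval_Term; apply: Gm_ext2 => //.
  move=> i hi /=; rewrite /sg; case: eqP => // hz.
  by have := hZdeg i; rewrite hz.
by move=> i hi; rewrite -map_comp.
Qed.

Lemma T_addone L j es : (j < k)%N -> tideal S (Term L k) ->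
  tideal S (Term (fun i => if i == j then L i ++ es else L i) k).
Proof.
elim: es L => [|v es IH] L hj hT.
  by apply: (T_perm hT) => i _; case: eqP; rewrite ?cats0.
have := IH (addL L j v) hj (T_add v hj hT).
move/T_perm; apply => i _; rewrite /addL; case: eqP => // _.
by rewrite -catA.
Qed.

Lemma T_addall L (E : nat -> seq nat) : tideal S (Term L k) ->
  tideal S (Term (fun i => L i ++ E i) k).
Proof.
move=> hT.
have H : forall m, (m <= k)%N -> tideal S (Term (fun i => if (i < m)%N then L i ++ E i else L i) k).
  elim=> [|m IH] hm.
    by apply: (T_perm hT) => i _; rewrite ltn0.
  have := T_addone (E m) hm (IH (ltnW hm)).
  move/T_perm; apply => i _; rewrite ltnS.
  by case: (ltngtP i m) => [h|h|->]; apply: perm_refl.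
have := H k (leqnn k); move/T_perm; apply => i hi; by rewrite hi.
Qed.
End TermDef.

Fixpoint rems (A B : seq nat) : seq nat :=
  match A with [::] => B | a :: A' => rems A' (rem a B) end.

Lemma perm_rems A B : (forall x, count_mem x A <= count_mem x B)%N ->
  perm_eq B (A ++ rems A B).
Proof.
elim: A B => [|a A IH] B h /=; first exact: perm_refl.
have ha : a \in B.
  rewrite -has_pred1 has_count; apply: leq_trans (h a); by rewrite /= eqxx.
apply: perm_trans (perm_to_rem ha) _; rewrite perm_cons; apply: IH => x.
rewrite count_rem ha /=; have := h x; rewrite /=.
case: (a == x) => /=; lia.
Qed.

Lemma count_flat_nseq (x : nat) (f g : nat -> nat) s :
  count_mem x (flatten [seq nseq (f l) (g l) | l <- s]) = sumn [seq (g l == x) * f l | l <- s].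
Proof. by elim: s => //= l s IH; rewrite count_cat count_nseq IH. Qed.

Lemma sumn_iota (x : nat) f a N :
  sumn [seq (l == x) * f l | l <- iota a N] = if (a <= x < a + N) then f x else 0.
Proof.
elim: N a => [|N IH] a /=; first by rewrite addn0; case: leqP.
rewrite IH; case: eqP => [->|hne] /=.
  by rewrite leqnn addnS ltnS leq_addr /= ltnn mul1n addn0.
rewrite mul0n add0n addnS addSn.
by case: (ltngtP a x) => h //=.
Qed.

Lemma sumn_zero (x : nat) (f phi : nat -> nat) s :
  (forall l, l \in s -> phi l != x) -> sumn [seq (phi l == x) * f l | l <- s] = 0.
Proof.
elim: s => //= l s IH h; rewrite (negbTE (h l (mem_head _ _))) IH //.
by move=> l' hl; apply: h; rewrite in_cons hl orbT.
Qed.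

Lemma sumn_phi (x : nat) (f g phi : nat -> nat) a N :
  (forall i j, (i < j < a + N)%N -> phi i < phi j)%N ->
  (forall l, (l < a + N)%N -> f l <= g (phi l))%N ->
  (sumn [seq (phi l == x) * f l | l <- iota a N] <= g x)%N.
Proof.
elim: N a => [|N IH] a hm hb //=.
case: eqP => [hx|hx].
  rewrite sumn_zero; last first.
    move=> l; rewrite mem_iota => /andP [h1 h2]; apply/eqP => hl.
    have : (a < l < a + N.+1)%N by rewrite h1 /= addnS -addSn.
    move/hm.
    by rewrite hx hl ltnn.
  by rewrite addn0 mul1n -hx; apply: hb; rewrite addnS ltnS leq_addr.
rewrite mul0n add0n; apply: IH => [i j|l]; rewrite addSnnS; [exact: hm | exact: hb].
Qed.

Unset Implicit Arguments.

Theorem mainTheorem13 (F : fieldType) (hF : infinite_field F)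
  (n : nat) (hn : (1 < n)%N)
  (k : nat) (hk : (0 < k)%N)
  (z : 'I_k -> var n) (hz_inj : injective z)
  (hz_deg : forall j : 'I_k, (0 < val (z j).1)%N)
  (hz_sum : (\sum_(j < k) val (z j).1 <= n - 1)%N)
  (s : 'S_k) (hs : s (Ordinal hk) = Ordinal hk)
  (Vf Vh : seq ('I_k -> nat)) (hle : leq_k Vf Vh) :
  tideal (fun t => t = Bcomm F (ltnW hn) hk z s Vf \/ UT_identity t)
         (Bcomm F (ltnW hn) hk z s Vh).
Proof.
set hn0 := ltnW hn.
pose o := Ordinal hk.
pose Z := fun i => z (s (insubd o i)).
pose LV := fun (V : seq ('I_k -> nat)) (i : nat) =>
  flatten [seq nseq (nth (fun _ => 0%N) V l (insubd o i)) l | l <- iota 0 (size V)].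
have hB : forall V, Bcomm F hn0 hk z s V = Term F hn0 Z (LV V) k.
  move=> V; rewrite /Bcomm /Term /Z.
  have -> : insubd o 0 = o by apply: val_inj; rewrite val_insubd hk.
  congr foldl; rewrite -[iota 0 k]val_enum_ord -[in RHS]map_comp; congr flatten; apply: eq_map => j /=.
  rewrite valKd; congr (_ ++ _).
  rewrite /LV valKd map_flatten -map_comp; congr flatten; apply: eq_map => l /=.
  by rewrite map_nseq.
set S := (fun t => _ \/ _).
have hS : forall t, UT_identity t -> S t by move=> t h; right.
have hZdeg : forall i, (0 < val (Z i).1)%N by move=> i; exact: hz_deg.
have hZinj : forall i j, (i < k)%N -> (j < k)%N -> Z i = Z j -> i = j.
  move=> i j hi hj /hz_inj /perm_inj /(congr1 val); by rewrite !val_insubd hi hj.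
have hT0 : tideal S (Term F hn0 Z (LV Vf) k) by rewrite -hB; apply: ti_gen; left.
case: hle => phi [hmono hbd].
have hT1 := T_phi hk hS hZdeg phi hT0.
have hT2 := T_addall hk hS hZdeg hZinj (fun i => rems (map phi (LV Vf i)) (LV Vh i)) hT1.
rewrite hB; apply: (T_perm hk hS hT2) => i hi.
rewrite perm_sym; apply: perm_rems => x.
set c := insubd o i.
rewrite /LV map_flatten -map_comp.
rewrite (@eq_map _ _ _ (fun l => nseq (nth (fun _ => 0%N) Vf l c) (phi l))); last first.
  by move=> l; rewrite /= map_nseq.
rewrite (count_flat_nseq x _ phi) (count_flat_nseq x _ id) /= sumn_iota add0n /=.
have -> : (if (x < size Vh)%N then nth (fun _ => 0%N) Vh x c else 0%N) = nth (fun _ => 0%N) Vh x c.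
  by case: ltnP => // h; rewrite nth_default.
apply: (@sumn_phi x (fun l => nth (fun=> 0%N) Vf l c) (fun y => nth (fun=> 0%N) Vh y c) phi 0 (size Vf)) => [i' j' h|l hl]; first by apply: hmono; rewrite add0n in h.
by rewrite add0n in hl; have [_ ->] := hbd l hl.
Qed.
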